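(* Let $k$ be a positive integer and let $\kappa$ be an infinite cardinal. Then there is an infinite cardinal $\lambda$ such that whenever $\mathbb{Q}^\lambda$ is $k$-coloured, there is a subset $X\subset\mathbb{Q}^\lambda$ with $|X|=\kappa$ and $X+X=\{x+y:x,y\in X\}$ monochromatic.
   Context: For a cardinal $\lambda$, $\mathbb{Q}^\lambda$ denotes the rational vector space of dimension $\lambda$ (the direct sum of $\lambda$ copies of $\mathbb{Q}$). A $k$-colouring is an arbitrary function to a set of $k$ colours. *)

(* Defs.v *)
(* rationals from mathcomp, cardinals modelled by types. *)
From Stdlib Require Import List.
From HB Require Import structures.
From mathcomp Require Import all_boot all_order all_algebra.
Set Implicit Arguments. Unset Strict Implicit. Unset Printing Implicit Defensive.
Import Order.TTheory GRing.Theory Num.Theory.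
Local Open Scope ring_scope.

Definition infinite_type (T : Type) : Prop :=
  exists f : nat -> T, forall m n, f m = f n -> m = n.

(* Q^L : finitely supported functions L -> rat (direct sum of L copies of Q). *)
Definition fin_supp (L : Type) (v : L -> rat) : Prop :=
  exists s : list L, forall l, v l != 0 -> In l s.

Definition vadd (L : Type) (u v : L -> rat) : L -> rat := fun l => u l + v l.

Definition has_card (L K : Type) (X : (L -> rat) -> Prop) : Prop :=
  exists f : K -> (L -> rat),
    (forall a b, f a = f b -> a = b) /\
    (forall a, X (f a)) /\
    (forall x, X x -> exists a, f a = x).

(* Main.v *)
From HB Require Import structures.
From Stdlib Require Import Lia.
Require Import Defs.
From mathcomp Require Import all_boot all_order all_algebra.
From mathcomp Require Import boolp wochoice zify.
From Stdlib Require Import Classical ClassicalEpsilon FunctionalExtensionality.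

Set Implicit Arguments. Unset Strict Implicit.

Notation "a +++ b" := (List.app a b) (at level 60, right associativity).

Fixpoint incr {T} (lt : T -> T -> Prop) (s : list T) : Prop :=
  match s with nil => True | x :: s' => (forall y, List.In y s' -> lt x y) /\ incr lt s' end.

Record wo {T} (lt : T -> T -> Prop) : Prop := {
  wo_irr : forall x, ~ lt x x;
  wo_trans : forall x y z, lt x y -> lt y z -> lt x z;
  wo_tot : forall x y, lt x y \/ x = y \/ lt y x;
  wo_wf : well_founded lt }.

Lemma incr_app {T} (lt : T -> T -> Prop) a b :
  incr lt (a +++ b) <-> incr lt a /\ incr lt b /\ (forall x y, List.In x a -> List.In y b -> lt x y).
Proof.
induction a as [|x a IH]; simpl.
- split; [tauto| intros [_ [H _]]; exact H].
- rewrite IH; split.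
  + intros [H1 [H2 [H3 H4]]]; split; [split|split]; auto.
    * intros y Hy; apply H1; apply List.in_or_app; auto.
    * intros x' y [<-|Hx] Hy; auto. apply H1; apply List.in_or_app; auto.
  + intros [[H1 H2] [H3 H4]]; split; [|split;[auto|split;auto]].
    intros y Hy; apply List.in_app_or in Hy as [Hy|Hy]; auto.
Qed.

Lemma incr_map {A B} (ltA : A -> A -> Prop) (ltB : B -> B -> Prop) (h : A -> B) s :
  (forall x y, ltA x y -> ltB (h x) (h y)) -> incr ltA s -> incr ltB (List.map h s).
Proof.
intros Hh; induction s as [|x s IH]; simpl; auto.
intros [H1 H2]; split; auto.
intros y Hy; apply List.in_map_iff in Hy as [z [<- Hz]]; auto.
Qed.

Lemma minimal_exists {T} (lt : T -> T -> Prop) (wf : well_founded lt) (P : T -> Prop) :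
  (exists x, P x) -> exists x, P x /\ forall y, P y -> ~ lt y x.
Proof.
intros [x Hx]; apply NNPP; intro Hno.
assert (H : forall z, ~ P z).
{ intro z; induction z as [z IH] using (well_founded_ind wf).
  intro Hz; apply Hno; exists z; split; auto. intros y Hy Hlt; exact (IH y Hlt Hy). }
exact (H x Hx).
Qed.

Lemma cantor (T : Type) (g : (T -> Prop) -> T) : ~ (forall X Y, g X = g Y -> X = Y).
Proof.
intro Hg.
set S := fun t => exists X, g X = t /\ ~ X t.
destruct (classic (S (g S))) as [H|H].
- destruct H as [X [HX HnX]]. apply Hg in HX. subst X. exact (HnX (ex_intro _ S (conj erefl HnX))) || (apply HnX; exists S; split; auto).
- apply H; exists S; split; auto.
Qed.

Lemma wo_exists (T : Type) : exists lt : T -> T -> Prop, wo lt.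
Proof.
pose T' : eqType := HB.pack T (gen_eqMixin T).
have [R HR] := @well_ordering_principle T'.
have Hmin : forall (A : T' -> Prop), (exists x, A x) -> exists z, A z /\ forall y, A y -> R z y.
{ move=> A [x Ax].
  have [z [[Az Hz] _]] := HR [pred y | `[< A y >] ] (ex_intro _ x (asboolT Ax)).
  exists z; split; first by move/asboolP: Az.
  move=> y Ay; apply: Hz; exact: (asboolT Ay). }
have Huniq : forall (A : T' -> Prop) z1 z2, A z1 -> A z2 -> (forall y, A y -> R z1 y) -> (forall y, A y -> R z2 y) -> z1 = z2.
{ move=> A z1 z2 A1 A2 H1 H2.
  have [z [_ Hu]] := HR [pred y | `[< A y >] ] (ex_intro _ z1 (asboolT A1)).
  rewrite -(Hu z1) ?(Hu z2) //; split; try exact: asboolT;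
  move=> y /asboolP Ay; [exact: H2|exact: H1]. }
have Hrefl : forall x, R x x.
{ move=> x; have [z [Hz H]] := Hmin (fun y => y = x) (ex_intro _ x erefl).
  by subst z; apply: H. }
have Htot : forall x y, R x y \/ R y x.
{ move=> x y; have [z [Hz H]] := Hmin (fun w => w = x \/ w = y) (ex_intro _ x (or_introl erefl)).
  case: Hz => E; subst z; [left|right]; apply: H; auto. }
have Hanti : forall x y, R x y -> R y x -> x = y.
{ move=> x y Hxy Hyx.
  apply: (Huniq (fun w => w = x \/ w = y)); auto;
  move=> w [->|->]; auto. }
exists (fun x y : T => R x y /\ x <> y); split.
- by move=> x [_ H].
- move=> x y z [Hxy nxy] [Hyz nyz]; split.
  + have [z0 [Hz H]] := Hmin (fun w => w = x \/ w = y \/ w = z) (ex_intro _ x (or_introl erefl)).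
    case: Hz => [E|[E|E]]; subst z0.
    * by apply: H; auto.
    * have := Hanti _ _ Hxy (H x (or_introl erefl)). by move=> E; subst.
    * have := Hanti _ _ Hyz (H y (or_intror (or_introl erefl))). by move=> E; subst.
  + move=> E; subst z; apply: nxy; exact: Hanti.
- move=> x y; case: (classic (x = y)) => [E|nE]; first by right; left.
  case: (Htot x y) => H; [left|right;right]; split; auto.
- move=> x; apply: NNPP => nA.
  have [z [nz Hz]] := Hmin (fun w => ~ Acc (fun x y : T => R x y /\ x <> y) w) (ex_intro _ x nA).
  apply: nz; constructor => y [Ryz nyz]; apply: NNPP => nAy.
  apply: nyz; apply: Hanti => //; exact: Hz.
Qed.

Section Chain.
Variables (n : nat) (L : Type) (lt : L -> L -> Prop) (Hwo : wo lt) (C : Type) (f : list L -> C).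

Definition chainF (a b : L) (rec : forall g, lt g b -> Prop) : Prop :=
  lt b a /\ forall t : list L, length t = n -> incr lt t ->
    (forall g, List.In g t -> exists h : lt g b, rec g h) -> f (t +++ b :: nil) = f (t +++ a :: nil).

Definition chain (a : L) : L -> Prop := Fix (wo_wf Hwo) (fun _ => Prop) (chainF a).

Lemma chain_eq a b : chain a b <->
  (lt b a /\ forall t : list L, length t = n -> incr lt t ->
    (forall g, List.In g t -> lt g b /\ chain a g) -> f (t +++ b :: nil) = f (t +++ a :: nil)).
Proof.
unfold chain at 1; rewrite Fix_eq.
- unfold chainF; split; intros [H1 H2]; split; auto; intros t Ht1 Ht2 Ht3; apply H2; auto;
  intros g Hg; destruct (Ht3 g Hg) as [h Hh]; [exists h; exact Hh| split; auto].
- intros x g1 g2 Hg. assert (E : g1 = g2).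
  { apply functional_extensionality_dep; intro y; apply functional_extensionality_dep; intro p; apply Hg. }
  rewrite E; reflexivity.
Qed.

Lemma chain_lt a b : chain a b -> lt b a.
Proof. intro H; apply chain_eq in H; tauto. Qed.

Lemma chain_sub a b g : chain a b -> (chain b g <-> chain a g /\ lt g b).
Proof.
intro Hab. revert g. intro g; induction g as [g IH] using (well_founded_ind (wo_wf Hwo)).
pose proof Hab as Hab'. apply chain_eq in Hab' as [Hba Hab2].
split.
- intro Hbg. pose proof Hbg as Hbg'. apply chain_eq in Hbg' as [Hgb Hbg2]. split; auto.
  apply chain_eq; split; [exact (wo_trans Hwo Hgb Hba)|].
  intros t Hl Hi Ht. rewrite Hbg2; auto.
  + apply Hab2; auto. intros d Hd. destruct (Ht d Hd) as [Hdg Had]. split; auto.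
    exact (wo_trans Hwo Hdg Hgb).
  + intros d Hd. destruct (Ht d Hd) as [Hdg Had]. split; auto.
    apply IH; auto. split; auto. exact (wo_trans Hwo Hdg Hgb).
- intros [Hag Hgb]. pose proof Hag as Hag'. apply chain_eq in Hag' as [Hga Hag2].
  apply chain_eq; split; auto. intros t Hl Hi Ht.
  assert (Ht' : forall d, List.In d t -> lt d g /\ chain a d).
  { intros d Hd. destruct (Ht d Hd) as [Hdg Hbd]. split; auto.
    apply (IH d Hdg) in Hbd. tauto. }
  rewrite Hag2; auto. symmetry; apply Hab2; auto.
  intros d Hd. destruct (Ht' d Hd) as [Hdg Had]. split; auto. exact (wo_trans Hwo Hdg Hgb).
Qed.

Lemma node_det a a' : (forall g, chain a g <-> chain a' g) ->
  (forall t, length t = n -> incr lt t -> (forall g, List.In g t -> chain a g) ->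
     f (t +++ a :: nil) = f (t +++ a' :: nil)) -> a = a'.
Proof.
intros Hc Hf. destruct (wo_tot Hwo a a') as [H|[H|H]]; auto; exfalso.
- assert (Hx : chain a' a).
  { apply chain_eq; split; auto. intros t Hl Hi Ht. apply Hf; auto.
    intros g Hg; apply Hc; apply Ht; auto. }
  apply Hc in Hx. exact (wo_irr Hwo (chain_lt Hx)).
- assert (Hx : chain a a').
  { apply chain_eq; split; auto. intros t Hl Hi Ht. symmetry; apply Hf; auto.
    intros g Hg; apply Ht; auto. }
  apply Hc in Hx. exact (wo_irr Hwo (chain_lt Hx)).
Qed.

Section Compar.
Variables (M : Type) (ltM : M -> M -> Prop) (HwoM : wo ltM) (a : L).

Definition EF (m : M) (rec : forall m', ltM m' m -> L) : L :=
  epsilon (inhabits a) (fun x => chain a x /\ (forall m' h, lt (rec m' h) x) /\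
     forall y, chain a y -> (forall m' h, lt (rec m' h) y) -> ~ lt y x).

Definition ee : M -> L := Fix (wo_wf HwoM) (fun _ => L) EF.

Lemma ee_eq m : ee m = epsilon (inhabits a) (fun x => chain a x /\ (forall m' (h : ltM m' m), lt (ee m') x) /\
     forall y, chain a y -> (forall m' (h : ltM m' m), lt (ee m') y) -> ~ lt y x).
Proof.
unfold ee at 1; rewrite Fix_eq; [reflexivity|].
intros x g1 g2 Hg. assert (E : g1 = g2).
{ apply functional_extensionality_dep; intro y; apply functional_extensionality_dep; intro p; apply Hg. }
rewrite E; reflexivity.
Qed.

Definition Q m x := chain a x /\ forall m', ltM m' m -> lt (ee m') x.

Lemma ee_spec m : (exists x, Q m x) -> Q m (ee m) /\ forall y, Q m y -> ~ lt y (ee m).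
Proof.
intro Hex. destruct (minimal_exists (wo_wf Hwo) Hex) as [x [Hx Hmin]].
rewrite ee_eq.
match goal with |- context [epsilon ?i ?P] => assert (HP : P (epsilon i P)) end.
{ apply epsilon_spec. exists x. destruct Hx as [Hx1 Hx2]. split; auto. split; auto.
  intros y Hy1 Hy2; apply Hmin; split; auto. }
destruct HP as [H1 [H2 H3]]. split; [split; auto|].
intros y [Hy1 Hy2]; apply H3; auto.
Qed.

Lemma compar : (exists e : M -> L, (forall x y, ltM x y -> lt (e x) (e y)) /\ forall m, chain a (e m)) \/
   (exists r : M -> L, forall b, chain a b -> exists m, r m = b).
Proof.
destruct (classic (forall m, exists x, Q m x)) as [Hall|Hnot].
- left; exists ee; split.
  + intros x y Hxy. destruct (ee_spec (Hall y)) as [[_ H] _]; auto.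
  + intro m; destruct (ee_spec (Hall m)) as [[H _] _]; auto.
- right. apply not_all_ex_not in Hnot.
  destruct (minimal_exists (wo_wf HwoM) Hnot) as [m0 [Hm0 Hmin]].
  exists ee. intros b Hb.
  assert (Hex : exists m', ltM m' m0 /\ ~ lt (ee m') b).
  { apply NNPP; intro H. apply Hm0; exists b; split; auto.
    intros m' Hm'; apply NNPP; intro H'; apply H; exists m'; auto. }
  destruct (minimal_exists (wo_wf HwoM) Hex) as [m1 [[Hm1 Hnb] Hmin1]].
  exists m1.
  assert (Hg : exists x, Q m1 x).
  { apply NNPP; intro H; exact (Hmin m1 H Hm1). }
  destruct (ee_spec Hg) as [_ Hle].
  assert (HQb : Q m1 b).
  { split; auto. intros m' Hm'. apply NNPP; intro H.
    exact (Hmin1 m' (conj (wo_trans HwoM Hm' Hm1) H) Hm'). }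
  specialize (Hle b HQb).
  destruct (wo_tot Hwo (ee m1) b) as [H|[H|H]]; auto; contradiction.
Qed.
End Compar.

Lemma preimage_list {A B} (r : A -> B) (t : list B) :
  (forall x, List.In x t -> exists y, r y = x) -> exists u, List.map r u = t.
Proof.
induction t as [|x t IH]; intro H.
- exists nil; reflexivity.
- destruct (H x (or_introl erefl)) as [y Hy].
  destruct IH as [u Hu]. { intros z Hz; apply H; right; auto. }
  exists (y :: u); simpl; rewrite Hy Hu; reflexivity.
Qed.

Lemma code_inj (M : Type) : (forall a, exists r : M -> L, forall b, chain a b -> exists m, r m = b) ->
  exists g : L -> ((M -> Prop) * (M -> M -> Prop) * (list (option M) -> C)),
    forall x y, g x = g y -> x = y.
Proof.
intro Hr.
set R := fun a => epsilon (inhabits (fun _ : M => a)) (fun r : M -> L => forall b, chain a b -> exists m, r m = b).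
assert (HR : forall a b, chain a b -> exists m, R a m = b).
{ intro a. unfold R. apply epsilon_spec. apply Hr. }
set back := fun a (o : option M) => match o with Some m => R a m | None => a end.
exists (fun a => (fun m => chain a (R a m), fun m m' => lt (R a m) (R a m'), fun u => f (List.map (back a) u))).
intros a a' E.
assert (E1 : forall m, chain a (R a m) <-> chain a' (R a' m)).
{ intro m. assert (E' := f_equal (fun p => fst (fst p) m) E). simpl in E'. rewrite E'. tauto. }
assert (E2 : forall m m', lt (R a m) (R a m') <-> lt (R a' m) (R a' m')).
{ intros m m'. assert (E' := f_equal (fun p => snd (fst p) m m') E). simpl in E'. rewrite E'. tauto. }
assert (E3 : forall u, f (List.map (back a) u) = f (List.map (back a') u)).
{ intro u. exact (f_equal (fun p => snd p u) E). }
assert (Hmap : forall x u o, List.map (back x) (List.map Some u +++ o :: nil) = List.map (R x) u +++ back x o :: nil).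
{ intros x u o. rewrite List.map_app List.map_map. reflexivity. }
assert (Main : forall b m, R a m = b -> chain a b -> R a' m = b).
{ intro b; induction b as [b IH] using (well_founded_ind (wo_wf Hwo)).
  intros m Hm Hab.
  assert (Hab' : chain a' (R a' m)). { apply E1; rewrite Hm; auto. }
  symmetry; apply node_det.
  - intro g. rewrite (chain_sub g Hab) (chain_sub g Hab'). split.
    + intros [Hag Hgb]. destruct (HR a g Hag) as [mg Hmg].
      assert (Hmg' : R a' mg = g). { apply IH; auto. }
      split.
      * rewrite -Hmg'. apply E1. rewrite Hmg; auto.
      * rewrite -Hmg'. apply E2. rewrite Hmg Hm; auto.
    + intros [Hag Hgb]. destruct (HR a' g Hag) as [mg Hmg].
      assert (Hc : chain a (R a mg)). { apply E1; rewrite Hmg; auto. }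
      assert (Hl : lt (R a mg) b). { rewrite -Hm. apply E2. rewrite Hmg; auto. }
      assert (Hmg' : R a' mg = R a mg). { apply IH; auto. }
      rewrite Hmg in Hmg'. rewrite Hmg'. split; auto.
  - intros t Hl Hi Ht.
    assert (Ht' : forall g, List.In g t -> chain a g /\ lt g b).
    { intros g Hg. apply (chain_sub g Hab). auto. }
    destruct (@preimage_list _ _ (R a) t) as [u Hu].
    { intros x Hx. apply HR. apply Ht'; auto. }
    assert (Hu' : List.map (R a') u = t).
    { rewrite -Hu. apply List.map_ext_in. intros x Hx.
      apply IH with (y := R a x); auto.
      - apply Ht'. rewrite -Hu. apply List.in_map; auto.
      - apply Ht'. rewrite -Hu. apply List.in_map; auto. }
    rewrite -{1}Hu -Hu' -Hm.
    change (f (List.map (R a) u +++ back a (Some m) :: nil) = f (List.map (R a') u +++ back a' (Some m) :: nil)).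
    rewrite -!Hmap. apply E3. }
apply node_det.
- intro g; split.
  + intro Hg. destruct (HR a g Hg) as [m Hm]. assert (Hm' := Main g m Hm Hg).
    rewrite -Hm'. apply E1. rewrite Hm; auto.
  + intro Hg. destruct (HR a' g Hg) as [m Hm].
    assert (Hc : chain a (R a m)). { apply E1; rewrite Hm; auto. }
    assert (Hm' := Main _ m erefl Hc). rewrite Hm in Hm'. rewrite Hm'; auto.
- intros t Hl Hi Ht.
  destruct (@preimage_list _ _ (R a) t) as [u Hu].
  { intros x Hx. apply HR. apply Ht; auto. }
  assert (Hu' : List.map (R a') u = t).
  { rewrite -Hu. apply List.map_ext_in. intros x Hx.
    apply Main; auto. apply Ht. rewrite -Hu. apply List.in_map; auto. }
  rewrite -{1}Hu -Hu'.
  change (f (List.map (R a) u +++ back a None :: nil) = f (List.map (R a') u +++ back a' None :: nil)).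
  rewrite -!Hmap. apply E3.
Qed.

End Chain.

Definition RamseyP (n : nat) : Prop :=
  forall (C W : Type) (ltW : W -> W -> Prop), wo ltW ->
  exists (L : Type) (ltL : L -> L -> Prop), wo ltL /\
    forall f : list L -> C, exists e : W -> L, (forall x y, ltW x y -> ltL (e x) (e y)) /\
      exists c0 : C, forall s : list W, length s = n -> incr ltW s -> f (List.map e s) = c0.

Lemma ramsey0 : RamseyP 0.
Proof.
intros C W ltW HW. exists W, ltW. split; auto. intro f. exists (fun x => x). split; auto.
exists (f nil). intros s Hs _. destruct s; [reflexivity|discriminate].
Qed.

Lemma ramsey_step n : RamseyP n -> RamseyP (S n).
Proof.
intros IH C W ltW HW. destruct (IH C W ltW HW) as [M [ltM [HM PM]]].
set T := ((M -> Prop) * (M -> M -> Prop) * (list (option M) -> C))%type.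
destruct (wo_exists (T -> Prop)) as [lt Hlt].
exists (T -> Prop), lt. split; auto. intro f.
assert (Hex : exists a, exists e : M -> (T -> Prop), (forall x y, ltM x y -> lt (e x) (e y)) /\
                forall m, chain n Hlt f a (e m)).
{ apply NNPP; intro Hno.
  assert (Hr : forall a, exists r : M -> (T -> Prop), forall b, chain n Hlt f a b -> exists m, r m = b).
  { intro a. destruct (compar n Hlt f HM a) as [H|H]; auto. exfalso; apply Hno; exists a; auto. }
  destruct (code_inj Hr) as [g Hg]. exact (cantor Hg). }
destruct Hex as [a [e' [He'1 He'2]]].
destruct (PM (fun u => f (List.map e' u +++ a :: nil))) as [e [He1 [c0 Hc0]]].
exists (fun w => e' (e w)). split. { intros x y Hxy; apply He'1, He1; auto. }
exists c0. intros s Hl Hi.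
destruct (@List.exists_last _ s) as [s' [w Hs]]. { destruct s; [discriminate|congruence]. }
subst s. apply incr_app in Hi as [Hi1 [_ Hi3]].
rewrite List.length_app in Hl. simpl in Hl.
assert (Hl' : length s' = n) by (rewrite <- plus_n_Sm, <- plus_n_O in Hl; congruence).
rewrite List.map_app. simpl.
assert (Hch := He'2 (e w)). apply chain_eq in Hch as [_ Hch].
rewrite Hch.
- rewrite <- (Hc0 s' Hl' Hi1). rewrite List.map_map. reflexivity.
- rewrite List.length_map; auto.
- apply (incr_map (ltA := ltW)); [intros x y H; apply He'1; apply He1; exact H|exact Hi1].
- intros g Hg. apply List.in_map_iff in Hg as [x [<- Hx]]. split; auto.
  apply He'1, He1. apply Hi3; simpl; auto.
Qed.

Theorem ramsey n : RamseyP n.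
Proof. induction n; [exact ramsey0| apply ramsey_step; auto]. Qed.

Definition sum_lt {A B} (ltA : A -> A -> Prop) (ltB : B -> B -> Prop) (x y : A + B) : Prop :=
  match x, y with
  | inl a, inl a' => ltA a a'
  | inl _, inr _ => True
  | inr _, inl _ => False
  | inr b, inr b' => ltB b b'
  end.

Lemma wo_sum {A B} (ltA : A -> A -> Prop) (ltB : B -> B -> Prop) :
  wo ltA -> wo ltB -> wo (sum_lt ltA ltB).
Proof.
intros HA HB; split.
- intros [x|x]; simpl; [apply (wo_irr HA)|apply (wo_irr HB)].
- intros [x|x] [y|y] [z|z]; simpl; try tauto; [apply (wo_trans HA)|apply (wo_trans HB)].
- intros [x|x] [y|y]; simpl; auto.
  + destruct (wo_tot HA x y) as [H|[H|H]]; subst; auto.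
  + destruct (wo_tot HB x y) as [H|[H|H]]; subst; auto.
- assert (HinA : forall a, Acc (sum_lt ltA ltB) (inl a)).
  { intro a; induction a as [a IH] using (well_founded_ind (wo_wf HA)).
    constructor; intros [y|y] Hy; simpl in Hy; [apply IH; auto|contradiction]. }
  intros [a|b]; auto.
  induction b as [b IH] using (well_founded_ind (wo_wf HB)).
  constructor; intros [y|y] Hy; simpl in Hy; auto.
Qed.

Definition lex_lt {A} (ltA : A -> A -> Prop) (x y : A * nat) : Prop :=
  ltA (fst x) (fst y) \/ (fst x = fst y /\ (snd x < snd y)%coq_nat).

Lemma wo_lex {A} (ltA : A -> A -> Prop) : wo ltA -> wo (lex_lt ltA).
Proof.
intros HA; split.
- intros [a m] [H|[_ H]]; simpl in H; [exact (wo_irr HA H)|lia].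
- intros [a m] [b m'] [c m''] [H1|[E1 H1]] [H2|[E2 H2]]; simpl in *; subst; unfold lex_lt; simpl.
  + left; exact (wo_trans HA H1 H2).
  + left; auto.
  + left; auto.
  + right; split; auto; lia.
- intros [a m] [b m']; unfold lex_lt; simpl.
  destruct (wo_tot HA a b) as [H|[H|H]]; auto. subst.
  destruct (Compare_dec.lt_eq_lt_dec m m') as [[H|H]|H]; subst; auto.
- intros [a m]. revert m.
  induction a as [a IH] using (well_founded_ind (wo_wf HA)).
  intro m; induction m as [m IHm] using (well_founded_ind Wf_nat.lt_wf).
  constructor; intros [b m'] [H|[E H]]; simpl in *; auto. subst; auto.
Qed.

Lemma wo_nat : wo (fun x y : nat => (x < y)%coq_nat).
Proof.
split; [intros; lia|intros; lia|intros x y; lia|exact Wf_nat.lt_wf].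
Qed.

Lemma incr_inj {A B} (ltA : A -> A -> Prop) (ltB : B -> B -> Prop) (HA : wo ltA) (HB : wo ltB) (e : A -> B) :
  (forall x y, ltA x y -> ltB (e x) (e y)) -> forall x y, e x = e y -> x = y.
Proof.
intros He x y Exy. destruct (wo_tot HA x y) as [H|[H|H]]; auto; apply He in H; rewrite Exy in H;
  exfalso; exact (wo_irr HB H).
Qed.

Lemma incr_seq a len : incr (fun x y : nat => (x < y)%coq_nat) (List.seq a len).
Proof.
revert a; induction len as [|len IH]; intro a; simpl; auto. split; auto.
intros y Hy; apply List.in_seq in Hy; lia.
Qed.

Definition emi := excluded_middle_informative.

Local Open Scope ring_scope.

Definition lvec2 {T} (A B : list T) : T -> rat := fun w =>
  if emi (List.In w A) then 2 else if emi (List.In w B) then 4 else 0.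

Definition push {W L : Type} (e : W -> L) (g : W -> rat) : L -> rat := fun l =>
  match emi (exists w, e w = l) with
  | left H => g (proj1_sig (constructive_indefinite_description _ H))
  | right _ => 0
  end.

Lemma if_iff {P Q : Prop} {A : Type} (x y : A) : (P <-> Q) -> (if emi P then x else y) = (if emi Q then x else y).
Proof.
intro H; destruct (emi P) as [p|p]; destruct (emi Q) as [q|q]; try reflexivity.
- exfalso; apply q; apply H; exact p.
- exfalso; apply p; apply H; exact q.
Qed.

Section Push.
Variables (W L : Type) (e : W -> L) (einj : forall x y, e x = e y -> x = y).

Lemma push_e g w : push e g (e w) = g w.
Proof.
unfold push. destruct (emi (exists w0, e w0 = e w)) as [H|H].
- destruct (constructive_indefinite_description _ H) as [w' Hw']; simpl. rewrite (einj Hw'); reflexivity.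
- exfalso; apply H; exists w; reflexivity.
Qed.

Lemma push_out g l : ~ (exists w, e w = l) -> push e g l = 0.
Proof. intro H; unfold push; destruct (emi (exists w, e w = l)); [contradiction|reflexivity]. Qed.

Lemma push_add g1 g2 : vadd (push e g1) (push e g2) = push e (fun w => g1 w + g2 w).
Proof.
apply functional_extensionality; intro l; unfold vadd.
destruct (classic (exists w, e w = l)) as [[w <-]|H].
- rewrite !push_e; reflexivity.
- rewrite !push_out //. 
Qed.

Lemma in_map_inj A w : List.In (e w) (List.map e A) <-> List.In w A.
Proof.
split; intro H.
- apply List.in_map_iff in H as [x [Ex Hx]]. rewrite -(einj Ex); auto.
- apply List.in_map; auto.
Qed.

Lemma lvec2_map A B : lvec2 (List.map e A) (List.map e B) = push e (lvec2 A B).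
Proof.
apply functional_extensionality; intro l.
destruct (classic (exists w, e w = l)) as [[w <-]|H].
- rewrite push_e. unfold lvec2.
  rewrite (if_iff _ _ (in_map_inj A w)) (if_iff _ _ (in_map_inj B w)). reflexivity.
- rewrite push_out //. unfold lvec2.
  destruct (emi (List.In l (List.map e A))) as [H1|H1].
  { destruct (proj1 (List.in_map_iff _ _ _) H1) as [x [Ex _]]; exfalso; apply H; eauto. }
  destruct (emi (List.In l (List.map e B))) as [H3|H3]; auto.
  destruct (proj1 (List.in_map_iff _ _ _) H3) as [x [Ex _]]; exfalso; apply H; eauto.
Qed.

End Push.

Definition Wt (K : Type) := (nat + ((K * nat) + nat))%type.

Section Pos.
Variable K : Type.

Definition Bw (s0 : nat) : list (Wt K) := List.map (fun m => inl m) (List.seq 0 s0).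
Definition Vw (t : nat) (a : K) : list (Wt K) := List.map (fun m => inr (inl (a, m))) (List.seq 0 t).
Definition Tw (st len : nat) : list (Wt K) := List.map (fun m => inr (inr m)) (List.seq st len).

Definition xw (s0 t s1 : nat) (a : K) (w : Wt K) : rat :=
  match w with
  | inl m => if emi (m < s0)%coq_nat then 1 else 0
  | inr (inl (a', m)) => if emi (a' = a /\ (m < t)%coq_nat) then 2 else 0
  | inr (inr m) => if emi (m < s1)%coq_nat then 2 else 0
  end.

Lemma in_B s0 w : List.In w (Bw s0) <-> exists m, w = inl m /\ (m < s0)%coq_nat.
Proof.
unfold Bw; rewrite List.in_map_iff; split.
- intros [m [<- Hm]]; apply List.in_seq in Hm; exists m; split; auto; lia.
- intros [m [-> Hm]]; exists m; split; auto; apply List.in_seq; lia.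
Qed.

Lemma in_V t a w : List.In w (Vw t a) <-> exists m, w = inr (inl (a, m)) /\ (m < t)%coq_nat.
Proof.
unfold Vw; rewrite List.in_map_iff; split.
- intros [m [<- Hm]]; apply List.in_seq in Hm; exists m; split; auto; lia.
- intros [m [-> Hm]]; exists m; split; auto; apply List.in_seq; lia.
Qed.

Lemma in_T st len w : List.In w (Tw st len) <-> exists m, w = inr (inr m) /\ (st <= m)%coq_nat /\ (m < st + len)%coq_nat.
Proof.
unfold Tw; rewrite List.in_map_iff; split.
- intros [m [<- Hm]]; apply List.in_seq in Hm; exists m; split; auto; lia.
- intros [m [-> Hm]]; exists m; split; auto; apply List.in_seq; lia.
Qed.

End Pos.

Section Mem.
Variable K : Type.


Lemma mBl (s0 : nat) (m : nat) : List.In (@inl _ (K * nat + nat) m) (Bw K s0) <-> (m < s0)%coq_nat.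
Proof. rewrite in_B; split; [intros [m' [E H]]; injection E; intros ->; auto| intros H; exists m; auto]. Qed.
Lemma mBv (s0 : nat) (a : K) (m : nat) : List.In (@inr nat _ (@inl _ nat (a, m))) (Bw K s0) <-> False.
Proof. rewrite in_B; split; [intros [m' [E H]]; discriminate|tauto]. Qed.
Lemma mBt (s0 : nat) (m : nat) : List.In (@inr nat _ (@inr (K * nat) _ m)) (Bw K s0) <-> False.
Proof. rewrite in_B; split; [intros [m' [E H]]; discriminate|tauto]. Qed.
Lemma mVl (t : nat) (a : K) (m : nat) : List.In (@inl _ (K * nat + nat) m) (Vw t a) <-> False.
Proof. rewrite in_V; split; [intros [m' [E H]]; discriminate|tauto]. Qed.
Lemma mVv (t : nat) (a : K) (a' : K) (m : nat) : List.In (@inr nat _ (@inl _ nat (a', m))) (Vw t a) <-> a' = a /\ (m < t)%coq_nat.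
Proof. rewrite in_V; split; [intros [m' [E H]]; injection E; intros -> ->; auto| intros [-> H]; exists m; auto]. Qed.
Lemma mVt (t : nat) (a : K) (m : nat) : List.In (@inr nat _ (@inr (K * nat) _ m)) (Vw t a) <-> False.
Proof. rewrite in_V; split; [intros [m' [E H]]; discriminate|tauto]. Qed.
Lemma mTl (st : nat) (len : nat) (m : nat) : List.In (@inl _ (K * nat + nat) m) (Tw K st len) <-> False.
Proof. rewrite in_T; split; [intros [m' [E H]]; discriminate|tauto]. Qed.
Lemma mTv (st : nat) (len : nat) (a : K) (m : nat) : List.In (@inr nat _ (@inl _ nat (a, m))) (Tw K st len) <-> False.
Proof. rewrite in_T; split; [intros [m' [E H]]; discriminate|tauto]. Qed.
Lemma mTt (st : nat) (len : nat) (m : nat) : List.In (@inr nat _ (@inr (K * nat) _ m)) (Tw K st len) <-> (st <= m)%coq_nat /\ (m < st + len)%coq_nat.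
Proof. rewrite in_T; split; [intros [m' [E H]]; injection E; intros ->; auto| intros H; exists m; auto]. Qed.
End Mem.

Ltac case_emi := repeat match goal with |- context [emi ?P] => destruct (emi P) end.
Ltac mem_simpl := repeat match goal with
  | H : context [List.In _ (_ +++ _)] |- _ => rewrite List.in_app_iff in H
  | H : context [List.In _ (Bw _ _)] |- _ => first [rewrite mBl in H|rewrite mBv in H|rewrite mBt in H]
  | H : context [List.In _ (Vw _ _)] |- _ => first [rewrite mVl in H|rewrite mVv in H|rewrite mVt in H]
  | H : context [List.In _ (Tw _ _ _)] |- _ => first [rewrite mTl in H|rewrite mTv in H|rewrite mTt in H]
  end.

Lemma xw_sum K s0 t s1 (a b : K) : a <> b -> forall w,
  xw s0 t s1 a w + xw s0 t s1 b w = lvec2 (Bw K s0 +++ Vw t a +++ Vw t b) (Tw K 0 s1) w.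
Proof.
intros Hab [m|[[a' m]|m]]; unfold lvec2, xw; case_emi; cbn [is_left]; mem_simpl; try (exfalso; intuition (try lia; try congruence); fail); try by [].
Qed.

Lemma xw_diag K s0 t s1 (a : K) : forall w,
  xw s0 t s1 a w + xw s0 t s1 a w = lvec2 (Bw K s0) (Vw t a +++ Tw K 0 s1) w.
Proof.
intros [m|[[a' m]|m]]; unfold lvec2, xw; case_emi; cbn [is_left]; mem_simpl; try (exfalso; intuition (try lia; try congruence); fail); try by [].
Qed.

Lemma xw_supp K s0 t s1 (a : K) w : xw s0 t s1 a w <> 0 -> List.In w (Bw K s0 +++ Vw t a +++ Tw K 0 s1).
Proof.
intro H; apply NNPP; intro Hn; apply H; clear H.
destruct w as [m|[[a' m]|m]]; unfold xw; case_emi; cbn [is_left]; try by [];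
exfalso; apply Hn; rewrite !List.in_app_iff; first [rewrite mBl|rewrite mBv|rewrite mBt];
first [rewrite mVl|rewrite mVv|rewrite mVt]; first [rewrite mTl|rewrite mTv|rewrite mTt]; intuition lia.
Qed.

Lemma xw_self K s0 t s1 (a : K) : (0 < t)%coq_nat -> xw s0 t s1 a (inr (inl (a, 0%N))) = 2.
Proof. intro H; unfold xw; case_emi; cbn [is_left]; [reflexivity|exfalso; intuition]. Qed.

Lemma xw_other K s0 t s1 (a b : K) : a <> b -> xw s0 t s1 b (inr (inl (a, 0%N))) = 0.
Proof. intro H; unfold xw; case_emi; cbn [is_left]; [exfalso; intuition|reflexivity]. Qed.

Lemma firstn_app_len {T} (A B : list T) n : n = length A -> List.firstn n (A +++ B) = A.
Proof. intros ->; induction A as [|x A IH]; simpl; [destruct B; reflexivity| rewrite IH; reflexivity]. Qed.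

Lemma skipn_app_len {T} (A B : list T) n : n = length A -> List.skipn n (A +++ B) = B.
Proof. intros ->; induction A as [|x A IH]; simpl; auto. Qed.

Lemma len_B K s0 : length (Bw K s0) = s0.
Proof. by rewrite /Bw List.length_map List.length_seq. Qed.
Lemma len_V K t (a : K) : length (Vw t a) = t.
Proof. by rewrite /Vw List.length_map List.length_seq. Qed.
Lemma len_T K st len : length (Tw K st len) = len.
Proof. by rewrite /Tw List.length_map List.length_seq. Qed.

Definition natlt (x y : nat) : Prop := (x < y)%coq_nat.
Definition ltWK {K} (ltK : K -> K -> Prop) : Wt K -> Wt K -> Prop :=
  sum_lt natlt (sum_lt (lex_lt ltK) natlt).

Section Incr.
Variables (K : Type) (ltK : K -> K -> Prop).

Lemma incr_B s0 : incr (ltWK ltK) (Bw K s0).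
Proof. apply (incr_map (ltA := natlt)); [intros x y H; exact H| apply incr_seq]. Qed.
Lemma incr_V t a : incr (ltWK ltK) (Vw t a).
Proof. apply (incr_map (ltA := natlt)); [intros x y H; simpl; unfold lex_lt; simpl; right; split; auto| apply incr_seq]. Qed.
Lemma incr_T st len : incr (ltWK ltK) (Tw K st len).
Proof. apply (incr_map (ltA := natlt)); [intros x y H; exact H| apply incr_seq]. Qed.
End Incr.

Ltac cross_tac := intros x y Hx Hy;
  repeat match goal with H : List.In _ (_ +++ _) |- _ => apply List.in_app_or in H; destruct H as [H|H] end;
  repeat match goal with
  | H : List.In _ (Bw _ _) |- _ => apply in_B in H; destruct H as [? [? ?]]; subst
  | H : List.In _ (Vw _ _) |- _ => apply in_V in H; destruct H as [? [? ?]]; subst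
  | H : List.In _ (Tw _ _ _) |- _ => apply in_T in H; destruct H as [? [? [? ?]]]; subst
  end; simpl; unfold natlt, lex_lt; simpl; first [exact I | lia | left; assumption | right; split; [reflexivity|lia]].

Lemma len_mB K L (e : Wt K -> L) s0 : length (List.map e (Bw K s0)) = s0.
Proof. by rewrite List.length_map len_B. Qed.
Lemma len_mV K L (e : Wt K -> L) t a : length (List.map e (Vw t a)) = t.
Proof. by rewrite List.length_map len_V. Qed.
Lemma len_mT K L (e : Wt K -> L) st len : length (List.map e (Tw K st len)) = len.
Proof. by rewrite List.length_map len_T. Qed.

Theorem theorem3 (k : nat) (hk : (0 < k)%N) (K : Type) (hK : infinite_type K) :
  exists L : Type, infinite_type L /\
    forall c : (L -> rat) -> 'I_k,
      exists X : (L -> rat) -> Prop,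
        (forall x, X x -> fin_supp x) /\ has_card K X /\
        exists i : 'I_k, forall x y, X x -> X y -> c (vadd x y) = i.
Proof.
destruct (wo_exists K) as [ltK HK].
have HW : wo (ltWK ltK) := wo_sum wo_nat (wo_sum (wo_lex HK) wo_nat).
destruct (ramsey (4 * k) (nat -> nat -> 'I_k) HW) as [L [ltL [HL PL]]].
exists L; split.
{ destruct (PL (fun _ _ _ => Ordinal hk)) as [e [He _]].
  exists (fun m => e (inl m)). intros m1 m2 E.
  have := incr_inj HW HL He E. by case. }
intro c.
destruct (PL (fun s p q => c (lvec2 (List.firstn p s) (List.firstn q (List.skipn p s)))))
  as [e [He [c0 Hc0]]].
have einj : forall x y, e x = e y -> x = y := incr_inj HW HL He.
have [i [j [Hij [Hjk Hc]]]] : exists i j, (i < j)%coq_nat /\ (j <= k)%coq_nat /\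
    c0 (2 * k - 2 * i)%N (2 * k + i)%N = c0 (2 * k - 2 * j)%N (2 * k + j)%N.
{ pose col := fun x : 'I_k.+1 => c0 (2 * k - 2 * x)%N (2 * k + x)%N.
  have Hni : ~ injective col.
  { move=> Hinj; have := leq_card col Hinj; by rewrite !card_ord ltnn. }
  apply: NNPP => Hno; apply: Hni => x y Exy; apply: val_inj.
  have Hx := ltn_ord x; have Hy := ltn_ord y.
  destruct (Compare_dec.lt_eq_lt_dec x y) as [[H|H]|H]; auto; exfalso; apply: Hno.
  - exists x, y; split; [exact H|split; [lia|exact Exy]].
  - exists y, x; split; [exact H|split; [lia|symmetry; exact Exy]]. }
pose s0 := (2 * k - 2 * j)%N. pose t := (j - i)%N. pose s1 := (2 * k + i)%N.
pose F := fun a => push e (xw s0 t s1 a).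
exists (fun x => exists a, x = F a). split; [|split].
- intros x [a ->]. exists (List.map e (Bw K s0 +++ Vw t a +++ Tw K 0 s1)). intros l Hl.
  destruct (classic (exists w, e w = l)) as [[w <-]|Hn].
  + rewrite /F (push_e einj) in Hl. apply List.in_map. apply xw_supp. by apply/eqP.
  + by rewrite /F push_out ?eqxx in Hl.
- exists F. split; [|split].
  + intros a b E. apply: NNPP => Hab.
    have := f_equal (fun g => g (e (inr (inl (a, 0%N))))) E.
    rewrite /F /= !(push_e einj) xw_self ?xw_other //; rewrite /t; lia.
  + intro a; exists a; reflexivity.
  + intros x [a ->]; exists a; reflexivity.
- exists (c0 (2 * k - 2 * j)%N (2 * k + j)%N). intros x y [a ->] [b ->].
  rewrite /F (push_add einj).
  have Hsum : forall a b, ltK a b ->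
      c (push e (fun w => xw s0 t s1 a w + xw s0 t s1 b w)) = c0 (2 * k - 2 * j)%N (2 * k + j)%N.
  { clear a b; intros a b Hab.
    have Hab' : a <> b by intros ->; exact (wo_irr HK Hab).
    rewrite (functional_extensionality _ _ (xw_sum s0 t s1 Hab')) -(lvec2_map einj).
    pose Ls := (Bw K s0 +++ Vw t a +++ Vw t b) +++ (Tw K 0 s1 +++ Tw K s1 i).
    have Hlen : length Ls = (4 * k)%N.
    { rewrite /Ls !List.length_app !len_B !len_V !len_T /s0 /t /s1; lia. }
    have Hinc : incr (ltWK ltK) Ls.
    { rewrite /Ls. apply incr_app; split; [|split].
      - apply incr_app; split; [apply incr_B|split; [apply incr_app; split; [apply incr_V|split; [apply incr_V|]]|]]; cross_tac.
      - apply incr_app; split; [apply incr_T|split; [apply incr_T|]]; cross_tac.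
      - cross_tac. }
    have H2 := f_equal (fun g => g (s0 + (t + t))%N s1) (Hc0 Ls Hlen Hinc).
    simpl in H2.
    have E : (2 * k - 2 * i = s0 + (t + t))%N by rewrite /s0 /t; lia.
    rewrite -Hc E -H2 /Ls !List.map_app.
    rewrite firstn_app_len; try (by rewrite ?List.length_app ?len_mB ?len_mV ?len_mT).
    rewrite skipn_app_len; try (by rewrite ?List.length_app ?len_mB ?len_mV ?len_mT).
    rewrite firstn_app_len; try (by rewrite ?List.length_app ?len_mB ?len_mV ?len_mT).
    all: try reflexivity. }
  destruct (classic (a = b)) as [<-|Hab].
  + rewrite (functional_extensionality _ _ (xw_diag s0 t s1 a)) -(lvec2_map einj).
    pose Ld := Bw K s0 +++ ((Vw t a +++ Tw K 0 s1) +++ Tw K s1 j).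
    have Hlen : length Ld = (4 * k)%N.
    { rewrite /Ld !List.length_app !len_B !len_V !len_T /s0 /t /s1; lia. }
    have Hinc : incr (ltWK ltK) Ld.
    { rewrite /Ld. apply incr_app; split; [apply incr_B|split; [|cross_tac]].
      apply incr_app; split; [|split; [apply incr_T|cross_tac]].
      apply incr_app; split; [apply incr_V|split; [apply incr_T|cross_tac]]. }
    have H2 := f_equal (fun g => g s0 (t + s1)%N) (Hc0 Ld Hlen Hinc).
    simpl in H2.
    have E : (2 * k + j = t + s1)%N by rewrite /t /s1; lia.
    rewrite E -H2 /Ld !List.map_app.
    rewrite firstn_app_len; try (by rewrite ?List.length_app ?len_mB ?len_mV ?len_mT).
    rewrite skipn_app_len; try (by rewrite ?List.length_app ?len_mB ?len_mV ?len_mT).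
    rewrite firstn_app_len; try (by rewrite ?List.length_app ?len_mB ?len_mV ?len_mT).
    all: try reflexivity.
  + destruct (wo_tot HK a b) as [Hlt|[E|Hlt]]; [exact (Hsum a b Hlt)|contradiction|].
    rewrite -(Hsum b a Hlt). f_equal. f_equal. apply functional_extensionality => w. apply: GRing.addrC.
Qed.
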